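(* Let $X$ be a nonnegative random variable with cumulative distribution function $F$, let $\gamma>0$ with $\mathbb{E}[\mathrm{e}^{\gamma X}]<\infty$, let $g\in\mathcal{G}$, and suppose there exists an optimal indemnity $\widehat{I}_g\in\mathcal{I}$ for the problem \[ \inf_{I\in\mathcal{I}} \mathbb{E}\Big[\mathrm{e}^{\gamma\,(X-I(X)+\pi(I))}\Big],\qquad \pi(I):=\mathbb{E}[g(I(X))]. \] Let $M:=\mathbb{E}[\mathrm{e}^{\gamma(X-\widehat{I}_g(X))}]$ and $d_g:=\frac{1}{\gamma}\ln(Mg'(0))$. Then the necessary condition satisfied by $\widehat{I}_g$ (namely $\widehat{I}_g(x)=0$ for $x\le d_g$, and for $x>d_g$, $\widehat{I}_g(x)\in(0,x)$ is the unique solution $y\in(0,x)$ of $\mathrm{e}^{\gamma(x-y)}=Mg'(y)$) implies that $\widehat{I}_g\in\mathcal{I}_c$, where \[ \mathcal{I}_c:=\{I\in\mathcal{I}\mid 0\le I(x')-I(x)\le x'-x \text{ for all } 0\le x\le x'\}. \] Moreover, $\widehat{I}_g$ is strictly increasing on $(d_g,\infty)$.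
   Context: $\mathcal{I}:=\{I:\mathbb{R}_+\to\mathbb{R} \text{ continuous} \mid 0\le I(x)\le x \text{ for all } x\ge 0\}$. $\mathcal{G}$ is the set of twice differentiable functions $g:\mathbb{R}_+\to\mathbb{R}_+$ with $g''\ge 0$, $g(0)=0$, $g(x)\ge x$ for all $x\ge 0$, and $g$ not identically equal to $x\mapsto x$ (so $g'\ge1$). *)

(* Defs.v *)
From HB Require Import structures.
From mathcomp Require Import all_boot all_order all_algebra.
From mathcomp Require Import all_classical all_reals all_analysis.
Set Implicit Arguments. Unset Strict Implicit. Unset Printing Implicit Defensive.
Import Order.TTheory GRing.Theory Num.Theory.
Import numFieldNormedType.Exports.
Local Open Scope classical_set_scope.
Local Open Scope ring_scope.

Section Defs.
Context {R : realType}.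

(* The class \mathcal{I}: continuous on R_+, with 0 <= I x <= x for x >= 0.
   Functions are represented as R -> R; only values on [0,+oo) matter. *)
Definition indemnity (I : R -> R) : Prop :=
  {within [set x : R | 0 <= x], continuous I} /\
  (forall x, 0 <= x -> 0 <= I x <= x).

Definition indemnity_c (I : R -> R) : Prop :=
  indemnity I /\
  (forall x x', 0 <= x -> x <= x' -> 0 <= I x' - I x <= x' - x).

(* The class \mathcal{G}: twice differentiable on R_+ (g is given on R; at 0
   the derivatives are taken two-sidedly, any g on R_+ admits such an
   extension), g'' >= 0, g(0) = 0, g(x) >= x on R_+ (hence g >= 0),
   and g is not the identity on R_+. *)
Definition premium_fun (g : R -> R) : Prop :=
  (forall x, 0 <= x -> derivable g x 1) /\
  (forall x, 0 <= x -> derivable (derive1 g) x 1) /\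
  (forall x, 0 <= x -> 0 <= derive1 (derive1 g) x) /\
  g 0 = 0 /\
  (forall x, 0 <= x -> x <= g x) /\
  (exists x, 0 <= x /\ g x <> x).

Context {dT : measure_display} {T : measurableType dT} (P : probability T R).

Definition premium (g : R -> R) (X : T -> R) (I : R -> R) : \bar R :=
  (\int[P]_w (g (I (X w)))%:E)%E.

Definition objective (gamma : R) (g : R -> R) (X : T -> R) (I : R -> R)
  : \bar R :=
  (\int[P]_w expeR ((gamma * (X w - I (X w)))%:E
                     + gamma%:E * premium g X I))%E.

Definition optimal_indemnity gamma g X (Ih : R -> R) : Prop :=
  indemnity Ih /\
  forall I, indemnity I -> (objective gamma g X Ih <= objective gamma g X I)%E.

Definition Mconst (gamma : R) (X : T -> R) (Ih : R -> R) : \bar R :=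
  (\int[P]_w (expR (gamma * (X w - Ih (X w))))%:E)%E.

End Defs.

Definition dg {R : realType} (gamma M : R) (g : R -> R) : R :=
  gamma^-1 * ln (M * derive1 g 0).

Definition necessary_condition {R : realType} (gamma M d : R) (g Ih : R -> R)
  : Prop :=
  (forall x, 0 <= x -> x <= d -> Ih x = 0) /\
  (forall x, 0 <= x -> d < x ->
     (0 < Ih x < x) /\
     expR (gamma * (x - Ih x)) = M * derive1 g (Ih x) /\
     (forall y, 0 < y < x -> expR (gamma * (x - y)) = M * derive1 g y -> y = Ih x)).

(* Main.v *)
Require Import Defs.
From HB Require Import structures.
From mathcomp Require Import all_boot all_order all_algebra.
From mathcomp Require Import all_classical all_reals all_analysis.
From mathcomp Require Import lra.
Import Order.TTheory GRing.Theory Num.Theory.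
Import numFieldNormedType.Exports.
Local Open Scope classical_set_scope.
Local Open Scope ring_scope.

Lemma gp_mono (R : realType) (g : R -> R) : premium_fun g ->
  forall y y', 0 <= y -> y <= y' -> derive1 g y <= derive1 g y'.
Proof.
move=> [_ [Hd2 [Hpos _]]] y y' y0 yy'.
apply: (@ger0_derive1_ndecry R (derive1 g) 0) => //.
- move=> x; rewrite in_itv /= andbT => /ltW; exact: Hd2.
- move=> x; rewrite in_itv /= andbT => /ltW; exact: Hpos.
- apply: continuous_in_subspaceT => x; rewrite inE /= in_itv /= andbT => x0.
  apply: differentiable_continuous; apply/derivable1_diffP; exact: Hd2.
Qed.

Lemma core (R : realType) (gamma M : R) (g Ih : R -> R) :
  0 < gamma -> 0 <= M ->
  (forall y y', 0 <= y -> y <= y' -> derive1 g y <= derive1 g y') ->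
  necessary_condition gamma M (dg gamma M g) g Ih ->
  (forall x x', 0 <= x -> x <= x' -> 0 <= Ih x' - Ih x <= x' - x) /\
  (forall x x', 0 <= x -> dg gamma M g < x -> x < x' -> Ih x < Ih x').
Proof.
move=> g0 M0 mono [NC1 NC2].
set d := dg gamma M g.
have strict : forall x x', 0 <= x -> d < x -> x < x' ->
    Ih x < Ih x' /\ Ih x' - Ih x <= x' - x.
  move=> x x' x0 dx xx'.
  have x'0 : 0 <= x' by apply: (le_trans x0); exact: ltW.
  have dx' : d < x' by exact: lt_trans dx xx'.
  have [/andP[y0 yx] [ey _]] := NC2 x x0 dx.
  have [/andP[y'0 y'x'] [ey' _]] := NC2 x' x'0 dx'.
  split.
    rewrite ltNge; apply/negP => y'y.
    have h1 : derive1 g (Ih x') <= derive1 g (Ih x) by apply: mono => //; exact: ltW.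
    have : expR (gamma * (x' - Ih x')) <= expR (gamma * (x - Ih x)).
      by rewrite ey ey'; apply: ler_wpM2l.
    rewrite ler_expR ler_pM2l // => h.
    have : x - Ih x < x' - Ih x' by apply: ltr_leD => //; rewrite lerN2.
    by rewrite ltNge h.
  rewrite leNgt; apply/negP => h.
  have h2 : x' - Ih x' < x - Ih x.
    by lra.
  have h3 : Ih x <= Ih x'.
    by lra.
  have h1 : derive1 g (Ih x) <= derive1 g (Ih x') by apply: mono => //; exact: ltW.
  have : expR (gamma * (x' - Ih x')) < expR (gamma * (x - Ih x)).
    by rewrite ltr_expR ltr_pM2l.
  rewrite ey ey' ltNge; apply/negP/negPn; exact: ler_wpM2l.
split; last first.
  by move=> x x' x0 dx xx'; have [] := strict x x' x0 dx xx'.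
move=> x x' x0 xx'.
have x'0 : 0 <= x' by exact: le_trans xx'.
have [dx|xd] := ltP d x.
  have [->|lt] := eqVneq x x'; first by rewrite !subrr lexx.
  have xlt : x < x' by rewrite lt_neqAle lt xx'.
  have [h1 h2] := strict x x' x0 dx xlt.
  by rewrite h2 subr_ge0 ltW.
rewrite (NC1 x x0 xd) subr0.
have [dx'|x'd] := ltP d x'; last by rewrite (NC1 x' x'0 x'd) lexx /= subr_ge0.
have [/andP[y'0 y'x'] [ey' _]] := NC2 x' x'0 dx'.
apply/andP; split; first lra.
suff : x <= x' - Ih x' by lra.
have [Mg0|Mg0] := ltP 0 (M * derive1 g 0).
  apply: (le_trans xd).
  have : expR (gamma * d) <= expR (gamma * (x' - Ih x')).
    rewrite ey' /d /dg mulrA mulfV ?gt_eqF // mul1r lnK ?posrE //.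
    by apply: ler_wpM2l => //; apply: mono => //; exact: ltW.
  by rewrite ler_expR ler_pM2l.
have d0 : d = 0 by rewrite /d /dg ln0 // mulr0.
have -> : x = 0 by apply/eqP; rewrite eq_le x0 andbT -d0.
by rewrite subr_ge0 ltW.
Qed.

Theorem corollary2p2 (R : realType) (dT : measure_display)
  (T : measurableType dT) (P : probability T R) (X : T -> R)
  (gamma : R) (g Ih : R -> R) :
  measurable_fun setT X ->
  (forall w, 0 <= X w) ->
  0 < gamma ->
  (\int[P]_w (expR (gamma * X w))%:E < +oo)%E ->
  premium_fun g ->
  optimal_indemnity P gamma g X Ih ->
  necessary_condition gamma (fine (Mconst P gamma X Ih))
    (dg gamma (fine (Mconst P gamma X Ih)) g) g Ih ->
  indemnity_c Ih /\
  (forall x x', 0 <= x -> dg gamma (fine (Mconst P gamma X Ih)) g < x ->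
     x < x' -> Ih x < Ih x').
Proof.
move=> _ _ g0 _ Hg [HI _] NC.
have M0 : 0 <= fine (Mconst P gamma X Ih).
  apply: fine_ge0; apply: integral_ge0 => w _; rewrite lee_fin; exact: expR_ge0.
have [h1 h2] := @core R _ _ g Ih g0 M0 (@gp_mono R g Hg) NC.
by split => //; split.
Qed.
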